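(* Let $\mathcal F$ be a nonempty hereditary family of finite subsets of $\mathbb N$. Then there is an infinite set $M\subset\mathbb N$ such that one of the following holds: (a) there is $d\in\mathbb N\cup\{0\}$ such that $\mathcal F\cap\mathcal P(M)=[M]^{\le d}$; (b) there is a strictly increasing map $f\colon M\to\mathbb N$ such that $\{F\subset M: F\text{ finite nonempty},\ \#F\le f(\min F)\}\subset\mathcal F$.
   Context: A family $\mathcal F$ of sets is hereditary if $B\in\mathcal F$ whenever $B\subset A$ and $A\in\mathcal F$. $\mathcal P(M)$ is the power set of $M$ and $[M]^{\le d}$ is the family of all subsets of $M$ of cardinality at most $d$. *)

(* Defs.v *)
From mathcomp Require Import all_boot all_order.
From mathcomp Require Import finmap.
Set Implicit Arguments. Unset Strict Implicit. Unset Printing Implicit Defensive.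
Local Open Scope fset_scope.

Definition hereditary (F : {fset nat} -> Prop) : Prop :=
  forall A B : {fset nat}, B `<=` A -> F A -> F B.

Definition infinite_nat (M : nat -> Prop) : Prop :=
  forall n, exists m, n <= m /\ M m.

Definition fsub_of (A : {fset nat}) (M : nat -> Prop) : Prop :=
  forall x, x \in A -> M x.

Definition is_fmin (m : nat) (A : {fset nat}) : Prop :=
  m \in A /\ forall x, x \in A -> m <= x.

Definition strictly_increasing_on (M : nat -> Prop) (f : nat -> nat) : Prop :=
  forall x y, M x -> M y -> x < y -> f x < f y.

(* Main.v *)
Require Import Defs.
From mathcomp Require Import all_boot all_order.
From mathcomp Require Import finmap.
From Stdlib Require Import Classical ClassicalEpsilon.
Local Open Scope fset_scope.

Definition subs (M N : nat -> Prop) := forall x, M x -> N x.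

Lemma build (S : nat -> (nat -> Prop) -> Prop) (T : nat -> nat -> (nat -> Prop) -> Prop) (N0 : nat -> Prop) :
  S 0 N0 -> infinite_nat N0 ->
  (forall k N a, S k N -> infinite_nat N -> N a -> exists N', S k.+1 N' /\ infinite_nat N' /\ subs N' N /\ (forall x, N' x -> a < x) /\ T k a N') ->
  exists (Ns : nat -> nat -> Prop) (a : nat -> nat), forall k, S k (Ns k) /\ infinite_nat (Ns k) /\ Ns k (a k) /\ subs (Ns k.+1) (Ns k) /\ (forall x, Ns k.+1 x -> a k < x) /\ T k (a k) (Ns k.+1).
Proof.
move=> S0 I0 step.
have he : forall N : nat -> Prop, exists x, infinite_nat N -> N x.
  move=> N; case: (classic (infinite_nat N)) => H; last by exists 0.
  by case: (H 0) => m [_ Hm]; exists m.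
pose e N := proj1_sig (constructive_indefinite_description _ (he N)).
have eP : forall N, infinite_nat N -> N (e N).
  by move=> N; rewrite /e; case: constructive_indefinite_description.
have hn : forall k N, exists N', S k N /\ infinite_nat N -> S k.+1 N' /\ infinite_nat N' /\ subs N' N /\ (forall x, N' x -> e N < x) /\ T k (e N) N'.
  move=> k N; case: (classic (S k N /\ infinite_nat N)) => H; last by exists N.
  case: H => H1 H2; case: (step k N (e N) H1 H2 (eP N H2)) => N' HN'. by exists N'.
pose nx k N := proj1_sig (constructive_indefinite_description _ (hn k N)).
have nxP : forall k N, S k N -> infinite_nat N -> S k.+1 (nx k N) /\ infinite_nat (nx k N) /\ subs (nx k N) N /\ (forall x, nx k N x -> e N < x) /\ T k (e N) (nx k N).
  move=> k N H1 H2; rewrite /nx; case: constructive_indefinite_description => N' /= HN'; exact: HN'.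
pose Ns := fix Ns k := match k with 0 => N0 | k'.+1 => nx k' (Ns k') end.
have Hs : forall k, S k (Ns k) /\ infinite_nat (Ns k).
  elim=> [|k [IH1 IH2]] //=. by case: (nxP k _ IH1 IH2) => [? [? _]].
exists Ns, (fun k => e (Ns k)) => k.
case: (Hs k) => H1 H2; case: (nxP k _ H1 H2) => [_ [_ [A [B C]]]].
by split=> //; split=> //; split; [exact: eP|].
Qed.

Lemma chain_props (Ns: nat -> nat -> Prop) (a : nat -> nat) :
  (forall k, Ns k (a k) /\ subs (Ns k.+1) (Ns k) /\ (forall x, Ns k.+1 x -> a k < x)) ->
  (forall i j, i <= j -> subs (Ns j) (Ns i)) /\ (forall i j, i < j -> a i < a j) /\ (forall i, i <= a i).
Proof.
move=> H.
have dec : forall i d, subs (Ns (i + d)%N) (Ns i).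
  move=> i; elim=> [|d IH] x; first by rewrite addn0.
  by rewrite addnS => /(proj1 (proj2 (H _))) /IH.
have dec' : forall i j, i <= j -> subs (Ns j) (Ns i).
  by move=> i j /subnKC <-; apply: dec.
have mono : forall i j, i < j -> a i < a j.
  move=> i j ij; have := proj1 (H j); move/(dec' _ _ ij); exact: (proj2 (proj2 (H i))).
split=> //; split=> //.
elim=> // i IH; exact: leq_ltn_trans IH (mono _ _ (ltnSn i)).
Qed.

Lemma subset_card n : forall A : {fset nat}, n <= #|` A| -> exists B, B `<=` A /\ #|` B| = n.
Proof.
elim: n => [|n IH] A H; first by exists fset0; rewrite fsub0set cardfs0.
have: A != fset0 by rewrite -cardfs_gt0; apply: leq_trans H.
case/fset0Pn => x xA.
have: n <= #|` A `\ x| by move: H; rewrite (cardfsD1 x A) xA.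
case/IH => B [BA cB]; exists (x |` B); split.
  apply/fsubsetP => y; case/fset1UP => [-> //|yB].
  by move/fsubsetP: BA => /(_ y yB); rewrite in_fsetD1 => /andP [].
rewrite cardfsU1 cB; case: (x \in B) / boolP => //.
by move/fsubsetP: BA => h /h; rewrite in_fsetD1 eqxx.
Qed.

Lemma key (Ns: nat -> nat -> Prop) (a : nat -> nat) (P : nat -> Prop) k (A : {fset nat}) :
  (forall k, Ns k (a k) /\ subs (Ns k.+1) (Ns k) /\ (forall x, Ns k.+1 x -> a k < x)) ->
  fsub_of A (fun x => exists i, P i /\ x = a i) -> #|` A| = k.+1 ->
  exists i, P i /\ a i \in A /\ fsub_of (A `\ a i) (Ns i.+1) /\ #|` A `\ a i| = k /\ A = a i |` (A `\ a i).
Proof.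
move=> H sA cA.
case: (chain_props _ _ H) => dec [mono _].
have ex : exists x, x \in A.
  by apply/fset0Pn; rewrite -cardfs_gt0 cA.
case: (ex_minnP ex) => m mA mmin.
case: (sA m mA) => i [Pi Em]; subst m.
exists i; split=> //; split=> //; split; last split.
- move=> x; rewrite in_fsetD1 => /andP [xm xA].
  case: (sA x xA) => j [_ ex']; subst x.
  have lij : a i < a j by rewrite ltn_neqAle eq_sym xm mmin.
  have ij : i < j.
    case: (ltngtP i j) => // [ji|E]; last by rewrite E ltnn in lij.
    by have := ltn_trans lij (mono _ _ ji); rewrite ltnn.
  exact: (dec _ _ ij) _ (proj1 (H j)).
- by move: cA; rewrite (cardfsD1 (a i) A) mA add1n => -[].
- by rewrite fsetD1K.
Qed.

Lemma ramsey k : forall (c : {fset nat} -> Prop) (N : nat -> Prop), infinite_nat N ->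
  exists M, infinite_nat M /\ subs M N /\
   ((forall A, fsub_of A M -> #|` A| = k -> c A) \/ (forall A, fsub_of A M -> #|` A| = k -> ~ c A)).
Proof.
elim: k => [|k IH] c N IN.
  exists N; split=> //; split=> //.
  by case: (classic (c fset0)) => H; [left|right] => A _ /cardfs0_eq ->.
pose T (i a : nat) (N' : nat -> Prop) := (forall B, fsub_of B N' -> #|` B| = k -> c (a |` B)) \/ (forall B, fsub_of B N' -> #|` B| = k -> ~ c (a |` B)).
have [Ns [a Hk]] : exists (Ns : nat -> nat -> Prop) (a : nat -> nat), forall k, (fun _ M => subs M N) k (Ns k) /\ infinite_nat (Ns k) /\ Ns k (a k) /\ subs (Ns k.+1) (Ns k) /\ (forall x, Ns k.+1 x -> a k < x) /\ T k (a k) (Ns k.+1).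
  apply: (@build (fun _ M => subs M N) T N (fun x h => h) IN).
  move=> k0 M x sMN IM Mx.
  have I1 : infinite_nat (fun y => M y /\ x < y).
    move=> n; case: (IM (maxn n x.+1)) => m [le Mm]; exists m.
    by rewrite geq_max in le; case/andP: le => -> ->.
  case: (IH (fun B => c (x |` B)) _ I1) => M' [IM' [sM' hom]].
  exists M'; split; first by move=> y /sM' [/sMN].
  split=> //; split; first by move=> y /sM' [].
  split; first by move=> y /sM' [].
  exact: hom.
have H : forall k, Ns k (a k) /\ subs (Ns k.+1) (Ns k) /\ (forall x, Ns k.+1 x -> a k < x).
  by move=> i; case: (Hk i) => _ [_ [? [? [? _]]]].
case: (chain_props _ _ H) => dec [mono age].
pose colT i := forall B, fsub_of B (Ns i.+1) -> #|` B| = k -> c (a i |` B).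
pose colF i := forall B, fsub_of B (Ns i.+1) -> #|` B| = k -> ~ c (a i |` B).
have gen : forall P, (forall i, P i -> colT i) \/ (forall i, P i -> colF i) -> (forall n, exists i, n <= i /\ P i) ->
    exists M, infinite_nat M /\ subs M N /\
   ((forall A, fsub_of A M -> #|` A| = k.+1 -> c A) \/ (forall A, fsub_of A M -> #|` A| = k.+1 -> ~ c A)).
  move=> P hc hinf; exists (fun x => exists i, P i /\ x = a i); split.
    move=> n; case: (hinf n) => i [ni Pi]; exists (a i); split; last by exists i.
    exact: leq_trans ni (age i).
  split; first by move=> x [i [_ ->]]; case: (Hk i) => S1 [_ [Ni _]]; exact: S1.
  case: hc => hc; [left|right] => A sA cA;
    case: (key _ _ P _ _ H sA cA) => i [Pi [_ [sB [cB ->]]]]; exact: hc.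
case: (classic (forall n, exists i, n <= i /\ colT i)) => hT.
  by apply: (gen colT) => //; left.
have [n hn] : exists n, forall i, n <= i -> ~ colT i.
  apply: NNPP => hne; apply: hT => n; apply: NNPP => hne2; apply: hne; exists n => i ni cT.
  by apply: hne2; exists i.
apply: (gen (fun i => n <= i)); last by move=> m; exists (maxn m n); rewrite leq_maxl leq_maxr.
right => i ni; case: (Hk i) => _ [_ [_ [_ [_ []]]]] //.
by move=> /(hn i ni).
Qed.

Theorem lemma4p8 (F : {fset nat} -> Prop) :
  (exists A, F A) -> hereditary F ->
  exists M : nat -> Prop, infinite_nat M /\
    ((exists d : nat, forall A : {fset nat}, fsub_of A M -> (F A <-> #|` A| <= d))
     \/
     (exists f : nat -> nat, strictly_increasing_on M f /\
        forall (A : {fset nat}) (m : nat), fsub_of A M -> is_fmin m A ->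
          #|` A| <= f m -> F A)).
Proof.
move=> [A0 FA0] her.
have F0 : F fset0 := her A0 fset0 (fsub0set _) FA0.
case: (classic (exists M : nat -> Prop, infinite_nat M /\ (exists d : nat, forall A : {fset nat}, fsub_of A M -> (F A <-> #|` A| <= d)))) => hA.
  by case: hA => M [IM hd]; exists M; split=> //; left.
pose S k (M : nat -> Prop) := forall A, fsub_of A M -> #|` A| <= k -> F A.
have [Ns [a Hk]] : exists (Ns : nat -> nat -> Prop) (a : nat -> nat), forall k, S k (Ns k) /\ infinite_nat (Ns k) /\ Ns k (a k) /\ subs (Ns k.+1) (Ns k) /\ (forall x, Ns k.+1 x -> a k < x) /\ (fun _ _ _ => True) k (a k) (Ns k.+1).
  apply: (@build S (fun _ _ _ => True) (fun _ => True)).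
  - by move=> A _; rewrite leqn0 => /eqP /cardfs0_eq ->.
  - by move=> n; exists n.
  move=> k M x SM IM Mx.
  have I1 : infinite_nat (fun y => M y /\ x < y).
    move=> n; case: (IM (maxn n x.+1)) => m [le Mm]; exists m.
    by rewrite geq_max in le; case/andP: le => -> ->.
  case: (ramsey k.+1 F _ I1) => M' [IM' [sM' hom]].
  case: hom => hom.
    exists M'; split.
      move=> A sA; rewrite leq_eqVlt => /orP [/eqP|]; first exact: hom.
      by rewrite ltnS; apply: SM => y /sA /sM' [].
    split=> //; split; first by move=> y /sM' [].
    by split=> // y /sM' [].
  exfalso; apply: hA; exists M'; split=> //; exists k => A sA; split.
    move=> FA; rewrite leqNgt; apply/negP => lt.
    case: (subset_card _ _ lt) => B [BA cB].
    apply: (hom B _ cB (her _ _ BA FA)).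
    by move=> y yB; apply: sA; move/fsubsetP: BA; apply.
  by apply: SM => y /sA /sM' [].
have H : forall k, Ns k (a k) /\ subs (Ns k.+1) (Ns k) /\ (forall x, Ns k.+1 x -> a k < x).
  by move=> i; case: (Hk i) => _ [_ [? [? [? _]]]].
case: (chain_props _ _ H) => dec [mono age].
have ainj : forall i j, a i = a j -> i = j.
  move=> i j E; case: (ltngtP i j) => // ij; have := mono _ _ ij; by rewrite E ltnn.
have amono : forall i j, a i <= a j -> i <= j.
  move=> i j E; rewrite leqNgt; apply/negP => /mono; by rewrite ltnNge E.
pose f x := match excluded_middle_informative (exists k, a k = x) with
  | left h => proj1_sig (constructive_indefinite_description _ h) | right _ => 0 end.
have fa : forall j, f (a j) = j.
  move=> j; rewrite /f; case: excluded_middle_informative => [h|[]]; last by exists j.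
  by case: constructive_indefinite_description => k /= /ainj.
exists (fun x => exists i, x = a i); split.
  by move=> n; exists (a n); split; [exact: age | exists n].
right; exists f; split.
  move=> _ _ [i ->] [j ->] lt; rewrite !fa.
  by case: (ltngtP i j) => // [ji|E]; [have := ltn_trans lt (mono _ _ ji) | rewrite E ltnn in lt]; rewrite ?ltnn.
move=> A m sA [mA mmin].
case: (sA m mA) => j Ej; subst m; rewrite fa.
apply: (proj1 (Hk j)) => x xA.
case: (sA x xA) => i Ei; subst x.
have ji : j <= i by apply: amono; apply: mmin.
exact: (dec _ _ ji) _ (proj1 (H i)).
Qed.
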